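(* Let $m$ be a tour with core $K$. Then the interior of $K$ equals $\bigcap_{\theta\in\mathbb{S}^1}\mathrm{int}\big(D^+(\theta)\big)$. Moreover, $\partial K\subseteq\bigcup_{\theta\in\mathbb{S}^1}D(\theta)$.
   Context: Write $\mathbb{S}^1=\mathbb{R}/2\pi\mathbb{Z}$, $u(\theta)=(\cos\theta,\sin\theta)$ and $u^\perp(\theta)=(-\sin\theta,\cos\theta)$. A ruled function $R:\mathbb{S}^1\to\mathbb{R}$ is one having a left limit $R_l(\theta)$ and a right limit $R_r(\theta)$ at every point. A tour is a continuous map $m:\mathbb{S}^1\to\mathbb{R}^2$ such that: - $m$ has left and right derivatives at every point; - there is a ruled function $R$ with $m'_l(\theta)=R_l(\theta)u(\theta)$ and $m'_r(\theta)=R_r(\theta)u(\theta)$. For each $\theta$, $D(\theta)=m(\theta)+\mathbb{R}u(\theta)$ is the line oriented by $u(\theta)$, and $D^+(\theta)=\{x:\langle x-m(\theta),u^\perp(\theta)\rangle\ge0\}$ is its closed left half-plane. The core of the tour is $K=\bigcap_{\theta}D^+(\theta)$. *)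

(* Defs.v *)
(* Stdlib reals + Coquelicot. Points of the plane are pairs (R * R),
   whose Coquelicot uniform structure is the product one (= usual topology). *)
From Stdlib Require Import Reals.
From Coquelicot Require Import Coquelicot.
Open Scope R_scope.

Definition pt := (R * R)%type.

(* S^1 = R / 2piZ : functions on S^1 are 2pi-periodic functions on R. *)
Definition periodic2pi {T : Type} (f : R -> T) : Prop :=
  forall t, f (t + 2 * PI) = f t.

Definition u (t : R) : pt := (cos t, sin t).
Definition uperp (t : R) : pt := (- sin t, cos t).

Definition dot (a b : pt) : R := fst a * fst b + snd a * snd b.
Definition psub (a b : pt) : pt := (fst a - fst b, snd a - snd b).
Definition padd (a b : pt) : pt := (fst a + fst b, snd a + snd b).
Definition pscal (k : R) (a : pt) : pt := (k * fst a, k * snd a).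

Definition has_left_limit (f : R -> R) (t l : R) : Prop :=
  filterlim f (at_left t) (locally l).
Definition has_right_limit (f : R -> R) (t l : R) : Prop :=
  filterlim f (at_right t) (locally l).

Definition ruled (f : R -> R) : Prop :=
  periodic2pi f /\
  forall t, (exists l, has_left_limit f t l) /\ (exists r, has_right_limit f t r).

Definition diff_quot (m : R -> pt) (t h : R) : pt :=
  pscal (/ h) (psub (m (t + h)) (m t)).
Definition is_left_deriv (m : R -> pt) (t : R) (v : pt) : Prop :=
  filterlim (diff_quot m t) (at_left 0) (locally v).
Definition is_right_deriv (m : R -> pt) (t : R) (v : pt) : Prop :=
  filterlim (diff_quot m t) (at_right 0) (locally v).

Definition tour (m : R -> pt) : Prop :=
  periodic2pi m /\
  (forall t, continuous m t) /\
  (forall t, exists vl, is_left_deriv m t vl) /\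
  (forall t, exists vr, is_right_deriv m t vr) /\
  exists Rf : R -> R, ruled Rf /\
    forall t, exists Rl Rr : R,
      has_left_limit Rf t Rl /\ has_right_limit Rf t Rr /\
      is_left_deriv m t (pscal Rl (u t)) /\
      is_right_deriv m t (pscal Rr (u t)).

Definition Dline (m : R -> pt) (t : R) (x : pt) : Prop :=
  exists s : R, x = padd (m t) (pscal s (u t)).
Definition Dplus (m : R -> pt) (t : R) (x : pt) : Prop :=
  dot (psub x (m t)) (uperp t) >= 0.

Definition core (m : R -> pt) (x : pt) : Prop := forall t : R, Dplus m t x.

Definition pinterior (A : pt -> Prop) (x : pt) : Prop := locally x A.
Definition pclosure (A : pt -> Prop) (x : pt) : Prop :=
  forall P : pt -> Prop, locally x P -> exists y, P y /\ A y.
Definition pboundary (A : pt -> Prop) (x : pt) : Prop :=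
  pclosure A x /\ ~ pinterior A x.

(* Main.v *)
Require Import Defs.
From Stdlib Require Import Reals Lra Psatz.
From Coquelicot Require Import Coquelicot.
Open Scope R_scope.

Definition F (m : R -> pt) (x : pt) (t : R) : R := dot (psub x (m t)) (uperp t).

Lemma F_unfold m x t : F m x t =
  (fst x - fst (m t)) * (- sin t) + (snd x - snd (m t)) * cos t.
Proof. reflexivity. Qed.

Lemma F_cont m x t : (forall t, continuous m t) -> continuity_pt (F m x) t.
Proof.
  intros Hc.
  assert (H1 : continuity_pt (fun t => fst (m t)) t).
  { apply continuity_pt_filterlim.
    apply (continuous_comp m fst). apply Hc. destruct (m t); apply continuous_fst. }
  assert (H2 : continuity_pt (fun t => snd (m t)) t).
  { apply continuity_pt_filterlim.
    apply (continuous_comp m snd). apply Hc. destruct (m t); apply continuous_snd. }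
  assert (E : F m x = (fun t => (fst x - fst (m t)) * (- sin t) + (snd x - snd (m t)) * cos t)).
  { reflexivity. }
  rewrite E.
  apply continuity_pt_plus; apply continuity_pt_mult.
  - apply continuity_pt_minus; [apply continuity_pt_const; intros a b; reflexivity | exact H1].
  - apply continuity_pt_opp. apply continuity_sin.
  - apply continuity_pt_minus; [apply continuity_pt_const; intros a b; reflexivity | exact H2].
  - apply continuity_cos.
Qed.

Lemma F_per m x t : periodic2pi m -> F m x (t + 2 * PI) = F m x t.
Proof.
  intros Hp. rewrite !F_unfold, Hp.
  replace (t + 2 * PI) with (t + 2 * INR 1 * PI) by (simpl; ring).
  rewrite sin_period, cos_period. reflexivity.
Qed.

Lemma F_per_n m x t n : periodic2pi m -> F m x (t + 2 * PI * INR n) = F m x t.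
Proof.
  intros Hp. induction n.
  - simpl. f_equal. ring.
  - rewrite S_INR. replace (t + 2 * PI * (INR n + 1)) with ((t + 2 * PI * INR n) + 2 * PI) by ring.
    rewrite F_per; auto.
Qed.

Lemma F_per_z m x t z : periodic2pi m -> F m x (t + 2 * PI * IZR z) = F m x t.
Proof.
  intros Hp. destruct z.
  - f_equal. simpl. ring.
  - change (IZR (Zpos p)) with (IPR p). rewrite <- INR_IPR. apply F_per_n; auto.
  - rewrite <- (F_per_n m x (t + 2 * PI * IZR (Z.neg p)) (Pos.to_nat p)); auto.
    f_equal. rewrite INR_IPR. change (IZR (Zneg p)) with (- IPR p). ring.
Qed.

Lemma reduce t : exists z : Z, 0 <= t - 2 * PI * IZR z <= 2 * PI.
Proof.
  pose proof PI_RGT_0.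
  destruct (archimed (t / (2 * PI))) as [A B].
  exists (up (t / (2 * PI)) - 1)%Z. rewrite minus_IZR.
  set (u0 := IZR (up (t / (2 * PI)))) in *.
  set (r := t / (2 * PI)) in *.
  assert (Ht : t = 2 * PI * r) by (unfold r; field; lra).
  rewrite Ht. split; nra.
Qed.

Lemma ball_box (x y : pt) e : ball x e y -> Rabs (fst y - fst x) < e /\ Rabs (snd y - snd x) < e.
Proof. intros [H1 H2]. split; [exact H1 | exact H2]. Qed.

Lemma box_ball (x y : pt) e : Rabs (fst y - fst x) < e -> Rabs (snd y - snd x) < e -> ball x e y.
Proof. intros H1 H2. split; [exact H1 | exact H2]. Qed.

Lemma F_lip m x y t : F m y t >= F m x t - (Rabs (fst y - fst x) + Rabs (snd y - snd x)).
Proof.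
  rewrite !F_unfold.
  pose proof (SIN_bound t). pose proof (COS_bound t).
  assert (E : (fst y - fst (m t)) * - sin t + (snd y - snd (m t)) * cos t =
     (fst x - fst (m t)) * - sin t + (snd x - snd (m t)) * cos t
     + ((fst y - fst x) * - sin t + (snd y - snd x) * cos t)) by ring.
  rewrite E.
  set (a := fst y - fst x). set (b := snd y - snd x).
  assert (a * - sin t >= - Rabs a).
  { destruct (Rcase_abs a); [rewrite Rabs_left by lra | rewrite Rabs_right by lra]; nra. }
  assert (b * cos t >= - Rabs b).
  { destruct (Rcase_abs b); [rewrite Rabs_left by lra | rewrite Rabs_right by lra]; nra. }
  lra.
Qed.

Lemma abs_sc e c : 0 < e -> -1 <= c <= 1 -> Rabs (e / 2 * c) < e.
Proof.
  intros He Hc. unfold Rabs. destruct (Rcase_abs _); nra.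
Qed.

Lemma int_Dplus m x t : pinterior (Dplus m t) x -> F m x t > 0.
Proof.
  intros [e He].
  pose proof (cond_pos e). pose proof (SIN_bound t). pose proof (COS_bound t).
  set (y' := (fst x - (e/2) * fst (uperp t), snd x - (e/2) * snd (uperp t))).
  assert (Hb : ball x e y').
  { apply box_ball; simpl.
    - match goal with |- Rabs ?a < _ => replace a with (e/2 * sin t) by ring end.
      apply abs_sc; lra.
    - match goal with |- Rabs ?a < _ => replace a with (- (e/2 * cos t)) by ring end.
      rewrite Rabs_Ropp. apply abs_sc; lra. }
  specialize (He _ Hb). unfold Dplus in He. change (F m y' t >= 0) in He.
  rewrite F_unfold in He. rewrite F_unfold. simpl in He.
  pose proof (sin2_cos2 t). unfold Rsqr in *. nra.
Qed.

Lemma Fpos_int m x t : F m x t > 0 -> pinterior (Dplus m t) x.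
Proof.
  intros H. exists (mkposreal (F m x t / 2) ltac:(lra)). intros y Hy.
  apply ball_box in Hy. simpl in Hy. pose proof (F_lip m x y t).
  unfold Dplus. change (F m y t >= 0). lra.
Qed.

Theorem mainTheorem2 (m : R -> pt) (Hm : tour m) :
  (forall x : pt, pinterior (core m) x <-> (forall t : R, pinterior (Dplus m t) x)) /\
  (forall x : pt, pboundary (core m) x -> exists t : R, Dline m t x).
Proof.
  destruct Hm as [Hp [Hc _]].
  assert (P1 : forall x : pt, pinterior (core m) x <-> (forall t : R, pinterior (Dplus m t) x)).
  { intros x; split.
    - intros [e He] t. exists e. intros y Hy. apply (He y Hy).
    - intros H.
      assert (Hpos : forall t, F m x t > 0) by (intro t; apply int_Dplus, H).
      pose proof PI_RGT_0.
      destruct (continuity_ab_min (F m x) 0 (2 * PI) ltac:(lra)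
                  (fun c _ => F_cont m x c Hc)) as [t0 [Hmin Ht0]].
      pose proof (Hpos t0).
      exists (mkposreal (F m x t0 / 2) ltac:(lra)). intros y Hy t.
      apply ball_box in Hy. simpl in Hy.
      destruct (reduce t) as [z Hz].
      pose proof (Hmin _ Hz).
      rewrite <- (F_per_z m x (t - 2 * PI * IZR z) z Hp) in H2.
      replace (t - 2 * PI * IZR z + 2 * PI * IZR z) with t in H2 by ring.
      pose proof (F_lip m x y t).
      unfold Dplus. change (F m y t >= 0). lra. }
  split; [exact P1|].
  intros x [Hcl Hni].
  assert (HK : forall t, F m x t >= 0).
  { intros t. destruct (Rge_or_gt (F m x t) 0) as [|Hl]; auto.
    exfalso.
    assert (Hloc : locally x (fun y => F m y t < 0)).
    { exists (mkposreal (- F m x t / 2) ltac:(lra)). intros y Hy.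
      apply ball_box in Hy. simpl in Hy.
      pose proof (F_lip m y x t).
      rewrite (Rabs_minus_sym (fst x)), (Rabs_minus_sym (snd x)) in H.
      lra. }
    destruct (Hcl _ Hloc) as [y [Hy1 Hy2]].
    specialize (Hy2 t). unfold Dplus in Hy2. change (F m y t >= 0) in Hy2. lra. }
  assert (Ht : exists t, F m x t <= 0).
  { apply Classical_Prop.NNPP. intros Hn. apply Hni. apply P1. intros t.
    apply Fpos_int. destruct (Rle_or_lt (F m x t) 0); auto. exfalso; eauto. }
  destruct Ht as [t Ht]. exists t.
  assert (H0 : F m x t = 0) by (specialize (HK t); lra).
  rewrite F_unfold in H0.
  exists ((fst x - fst (m t)) * cos t + (snd x - snd (m t)) * sin t).
  pose proof (sin2_cos2 t) as HS. unfold Rsqr in HS.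
  destruct x as [x1 x2]. unfold padd, pscal, u. simpl in *. f_equal.
  - apply Rminus_diag_uniq.
    transitivity (- sin t * ((x1 - fst (m t)) * - sin t + (x2 - snd (m t)) * cos t)
       + (x1 - fst (m t)) * (1 - (sin t * sin t + cos t * cos t))); [ring|].
    rewrite H0, HS. ring.
  - apply Rminus_diag_uniq.
    transitivity (cos t * ((x1 - fst (m t)) * - sin t + (x2 - snd (m t)) * cos t)
       + (x2 - snd (m t)) * (1 - (sin t * sin t + cos t * cos t))); [ring|].
    rewrite H0, HS. ring.
Qed.
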